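(* Let $(\mathcal A,\varphi,\mathcal F,\Phi)$ be a ncps of type B$'$ with associated infinitesimal ncps $(\mathcal B,\varphi,\varphi')$. Let $a_1,a_2\in\mathcal A$ and $f_1,f_2\in\mathcal F$ and assume that $(\{a_1,a_2\},\{f_1,f_2\})$ is B$'$-free, i.e. with $\mathcal A_i$ the unital subalgebra generated by $a_i$ and $\mathcal F_j$ the subalgebra generated by $f_j$, the pair $((\mathcal A_i)_{i=1,2},(\mathcal F_j)_{j=1,2})$ is B$'$-free. Let $b_i=a_i+f_i\in\mathcal B$. If $a_i$ has distribution $\mu_i$ w.r.t. $\varphi$ and $f_i$ has distribution $\nu_i$ w.r.t. $\varphi'$ ($i=1,2$), then the infinitesimal distribution of $b_1+b_2$ w.r.t. $(\varphi,\varphi')$ is $(\mu_1\boxplus\mu_2,\nu)$, where $\nu$ is characterized by $$G_\nu(z)=G_{\nu_1+\nu_2}(F_{\mu_1\boxplus\mu_2}(z))\,F_{\mu_1\boxplus\mu_2}'(z).$$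
   Context: Ncps of type B$'$ $(\mathcal A,\varphi,\mathcal F,\Phi)$: $\mathcal A$ unital complex algebra, $\varphi(1_{\mathcal A})=1$, $\mathcal F$ an algebra which is an $\mathcal A$-bimodule compatible with its multiplication, $\Phi:\mathcal F\to\mathbb C$ linear. $\mathcal B=\mathcal A\oplus\mathcal F$ with product $(a_1,f_1)(a_2,f_2)=(a_1a_2,a_1f_2+f_1a_2+f_1f_2)$; $\varphi(a+f):=\varphi(a)$, $\varphi'(a+f):=\Phi(f)$. For unital subalgebras $(\mathcal A_i)_{i\in I}$ of $\mathcal A$ and subalgebras $(\mathcal F_j)_{j\in J}$ of $\mathcal F$, the pair is B$'$-free if: (i) $(\mathcal A_i)$ are free w.r.t. $\varphi$ ($\varphi(c_1\cdots c_n)=0$ for alternating indices and centered $c_l\in\mathcal A_{i_l}$); (ii) with $\mathcal A_0$ the algebra generated by all $\mathcal A_i$ and $\mathcal F_0$ the algebra generated by all $\mathcal F_j$, $\Phi(c_0g_1c_1\cdots c_{n-1}g_nc_n)=\varphi(c_0c_n)\prod_{l=1}^{n-1}\varphi(c_l)\,\Phi(g_1\cdots g_n)$ for $c_l\in\mathcal A_0$, $g_l\in\mathcal F_0$ (cyclic-antimonotone independence); (iii) $\Phi(g_1\cdots g_n)=0$ whenever $n\ge2$, $j_1\ne j_2\ne\cdots\ne j_n$, $g_l\in\mathcal F_{j_l}$ (trivial independence). The distribution of $b$ w.r.t. $\omega$ is the functional $x^n\mapsto\omega(b^n)$ on $\mathbb C[x]$ ($b^0=1$); infinitesimal distribution w.r.t.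 $(\varphi,\varphi')$ is the pair. $\mu_1\boxplus\mu_2$ is the free convolution (distribution of the sum of two free elements with distributions $\mu_1,\mu_2$). $G_\mu(z)=\sum_{n\ge0}\mu(x^n)z^{-n-1}$, $F_\mu=1/G_\mu$, as formal series; $\nu_1+\nu_2$ is the sum of linear functionals. *)

(* Defs.v *)
From HB Require Import structures.
From mathcomp Require Import all_boot all_order all_algebra.
From mathcomp Require Export complex reals.
Set Implicit Arguments. Unset Strict Implicit. Unset Printing Implicit Defensive.
Import GRing.Theory Num.Theory.
Local Open Scope ring_scope.

Section NcpsBprime.
Variable C : fieldType.

Definition ncpsB'_axioms (A : algType C) (F : lmodType C) (phi : {scalar A})
  (mulF : F -> F -> F) (lact : A -> F -> F) (ract : F -> A -> F) : Prop :=
  phi 1 = 1 /\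
  (forall f g h, mulF f (mulF g h) = mulF (mulF f g) h) /\
  (forall (c : C) f g h, mulF (c *: f + g) h = c *: mulF f h + mulF g h) /\
  (forall (c : C) f g h, mulF f (c *: g + h) = c *: mulF f g + mulF f h) /\
  (forall f, lact 1 f = f) /\
  (forall a b f, lact (a * b) f = lact a (lact b f)) /\
  (forall f, ract f 1 = f) /\
  (forall a b f, ract f (a * b) = ract (ract f a) b) /\
  (forall a b f, lact a (ract f b) = ract (lact a f) b) /\
  (forall (c : C) a b f, lact (c *: a + b) f = c *: lact a f + lact b f) /\
  (forall (c : C) a f g, lact a (c *: f + g) = c *: lact a f + lact a g) /\
  (forall (c : C) a b f, ract f (c *: a + b) = c *: ract f a + ract f b) /\
  (forall (c : C) a f g, ract (c *: f + g) a = c *: ract f a + ract g a) /\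
  (forall a f g, lact a (mulF f g) = mulF (lact a f) g) /\
  (forall a f g, ract (mulF f g) a = mulF f (ract g a)) /\
  (forall a f g, mulF (ract f a) g = mulF f (lact a g)).

(* The algebra B = A (+) F, with elements represented as pairs (a, f). *)
Section B.
Variables (A : algType C) (F : lmodType C)
  (mulF : F -> F -> F) (lact : A -> F -> F) (ract : F -> A -> F).

Definition addB (x y : A * F) : A * F := (x.1 + y.1, x.2 + y.2).
Definition mulB (x y : A * F) : A * F :=
  (x.1 * y.1, lact x.1 y.2 + ract x.2 y.1 + mulF x.2 y.2).
Definition oneB : A * F := (1, 0).
Definition powB (b : A * F) (n : nat) : A * F := iter n (mulB b) oneB.
Definition varphiB (phi : A -> C) (x : A * F) : C := phi x.1.
Definition varphi'B (Phi : F -> C) (x : A * F) : C := Phi x.2.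

Definition in_ualg1 (a x : A) : Prop :=
  exists (n : nat) (c : nat -> C), x = \sum_(k < n) c k *: a ^+ k.
(* f^(k+1) in F *)
Definition fpowS (f : F) (k : nat) : F := iter k (mulF f) f.
Definition in_alg1F (f g : F) : Prop :=
  exists (n : nat) (c : nat -> C), g = \sum_(k < n) c k *: fpowS f k.
Definition in_ualg2 (a : bool -> A) (x : A) : Prop :=
  exists s : seq (C * seq bool), x = \sum_(p <- s) p.1 *: \prod_(i <- p.2) a i.
Fixpoint fword (f : bool -> F) (x : bool) (w : seq bool) : F :=
  match w with
  | [::] => f x
  | y :: w' => mulF (f x) (fword f y w')
  end.
Definition in_alg2F (f : bool -> F) (g : F) : Prop :=
  exists s : seq (C * (bool * seq bool)),
    g = \sum_(p <- s) p.1 *: fword f p.2.1 p.2.2.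

Fixpoint altF (c : nat -> A) (g : nat -> F) (k m : nat) : F :=
  match m with
  | 0 => ract (g k) (c k)
  | m'.+1 => mulF (ract (g k) (c k)) (altF c g k.+1 m')
  end.
Fixpoint gprod (g : nat -> F) (k m : nat) : F :=
  match m with
  | 0 => g k
  | m'.+1 => mulF (g k) (gprod g k.+1 m')
  end.

Definition free_pair (phi : A -> C) (a : bool -> A) : Prop :=
  forall (n : nat) (idx : nat -> bool) (c : nat -> A),
    (0 < n)%N ->
    (forall l, (l < n)%N -> in_ualg1 (a (idx l)) (c l) /\ phi (c l) = 0) ->
    (forall l, (l.+1 < n)%N -> idx l != idx l.+1) ->
    phi (\prod_(l < n) c l) = 0.

(* (ii) cyclic-antimonotone independence: for n = m+1 >= 1,
   Phi(c_0 g_1 c_1 ... g_n c_n) = phi(c_0 c_n) prod_(l=1)^(n-1) phi(c_l) Phi(g_1...g_n) *)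
Definition cyc_antimonotone (phi : A -> C) (Phi : F -> C)
  (a : bool -> A) (f : bool -> F) : Prop :=
  forall (m : nat) (c : nat -> A) (g : nat -> F),
    (forall l, (l <= m.+1)%N -> in_ualg2 a (c l)) ->
    (forall l, (1 <= l <= m.+1)%N -> in_alg2F f (g l)) ->
    Phi (lact (c 0%N) (altF c g 1 m)) =
      phi (c 0%N * c m.+1) * (\prod_(1 <= l < m.+1) phi (c l)) * Phi (gprod g 1 m).

(* (iii) trivial independence: for n = m+2 >= 2 alternating factors *)
Definition trivially_indep (Phi : F -> C) (f : bool -> F) : Prop :=
  forall (m : nat) (idx : nat -> bool) (g : nat -> F),
    (forall l, (l <= m.+1)%N -> in_alg1F (f (idx l)) (g l)) ->
    (forall l, (l <= m)%N -> idx l != idx l.+1) ->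
    Phi (gprod g 0 m.+1) = 0.

(* B'-freeness of ((A_i)_{i=1,2}, (F_j)_{j=1,2}), A_i generated by a_i,
   F_j generated by f_j (indices 1,2 encoded as false,true) *)
Definition B'free (phi : A -> C) (Phi : F -> C) (a : bool -> A) (f : bool -> F) :=
  [/\ free_pair phi a, cyc_antimonotone phi Phi a f & trivially_indep Phi f].

End B.

(* mu is the free convolution mu1 [+] mu2: the distribution of x1 + x2 for
   free x1, x2 (in a ncps (A', psi)) having distributions mu1, mu2. *)
Definition is_free_conv (mu1 mu2 mu : nat -> C) : Prop :=
  exists (A' : algType C) (psi : {scalar A'}) (x : bool -> A'),
    psi 1 = 1 /\ free_pair psi x /\
    (forall n, psi (x false ^+ n) = mu1 n) /\
    (forall n, psi (x true ^+ n) = mu2 n) /\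
    (forall n, psi ((x false + x true) ^+ n) = mu n).

(* Formal series.  A formal Laurent series in z^-1 with finite pole     *)
(* order is represented as (k, s) : int * (nat -> C), meaning           *)
(*     sum_(j >= 0) s j * z^-(k + j).                                   *)
Definition fps := nat -> C.
Definition fps_mul (a b : fps) : fps := fun n => \sum_(i < n.+1) a i * b (n - i)%N.
(* first n+1 coefficients of 1/a (for a 0 != 0) *)
Fixpoint inv_seq (a : fps) (n : nat) : seq C :=
  match n with
  | 0 => [:: (a 0%N)^-1]
  | n'.+1 => let b := inv_seq a n' in
      rcons b (- (a 0%N)^-1 * \sum_(i < n'.+1) a i.+1 * nth 0 b (n' - i)%N)
  end.
Definition fps_inv (a : fps) : fps := fun n => nth 0 (inv_seq a n) n.

Definition lser := (int * fps)%type.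
(* coefficient of z^-m *)
Definition lcoef (s : lser) (m : int) : C :=
  match (m - s.1)%R with Posz j => s.2 j | Negz _ => 0 end.
Definition lone : lser := (0%:Z, fun j => (j == 0%N)%:R).
Definition lmul (s t : lser) : lser := (s.1 + t.1, fps_mul s.2 t.2).
(* 1/s, for s.2 0 != 0 *)
Definition linv (s : lser) : lser := (- s.1, fps_inv s.2).
Definition lpow (s : lser) (n : nat) : lser := iter n (lmul s) lone.
(* d/dz : z^-(k+j) |-> -(k+j) z^-(k+j+1) *)
Definition lderz (s : lser) : lser :=
  (s.1 + 1, fun j => - ((s.1 + j%:Z)%:~R) * s.2 j).
(* the Cauchy transform G_mu(z) = sum_(n >= 0) mu(x^n) z^-(n+1) *)
Definition Gser (mu : nat -> C) : lser := (1%:Z, mu).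
Definition Fser (mu : nat -> C) : lser := linv (Gser mu).
(* G_rho(X(z)) = sum_n rho(x^n) X(z)^-(n+1), given Y = 1/X of order >= 1
   in z^-1 (so that only n <= m contribute to the coefficient of z^-m) *)
Definition Gcomp_inv (rho : nat -> C) (Y : lser) : lser :=
  (0%:Z, fun m => \sum_(n < m.+1) rho n * lcoef (lpow Y n.+1) m%:Z).
Definition Gcomp (rho : nat -> C) (X : lser) : lser := Gcomp_inv rho (linv X).

End NcpsBprime.

(* Main.v *)
Require Import Defs.
From mathcomp Require Import all_boot all_order all_algebra.
From mathcomp Require Import complex reals.
From mathcomp Require Import zify ring.
Set Implicit Arguments. Unset Strict Implicit. Unset Printing Implicit Defensive.
Import GRing.Theory Num.Theory.
Local Open Scope ring_scope.


Section PartA.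
Variable C : fieldType.

Definition ev (A : algType C) (x : A) (p : {poly C}) : A := horner_alg x p.

Lemma evE (A : algType C) (x : A) p : ev x p = \sum_(i < size p) p`_i *: x ^+ i.
Proof.
rewrite /ev -{1}(coefK p) poly_def linear_sum; apply: eq_bigr => i _.
by rewrite linearZ /= rmorphXn /= horner_algX mulr_algl.
Qed.

Lemma ev_mom (A1 A2 : algType C) (phi1 : {scalar A1}) (phi2 : {scalar A2}) (x1 : A1) (x2 : A2) :
  (forall n, phi1 (x1 ^+ n) = phi2 (x2 ^+ n)) -> forall p, phi1 (ev x1 p) = phi2 (ev x2 p).
Proof.
move=> h p; rewrite !evE !linear_sum; apply: eq_bigr => i _; by rewrite !linearZ /= h.
Qed.

Definition wprod (A : algType C) (x : bool -> A) (s : seq (bool * {poly C})) : A :=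
  \prod_(q <- s) ev (x q.1) q.2.

Lemma wprod_cat (A : algType C) (x : bool -> A) s1 s2 : wprod x (s1 ++ s2) = wprod x s1 * wprod x s2.
Proof. by rewrite /wprod big_cat. Qed.

Lemma wprod_cons (A : algType C) (x : bool -> A) u s : wprod x (u :: s) = ev (x u.1) u.2 * wprod x s.
Proof. by rewrite /wprod big_cons. Qed.

Lemma wprod_nil (A : algType C) (x : bool -> A) : wprod x [::] = 1.
Proof. by rewrite /wprod big_nil. Qed.

Lemma not_sorted_split (s : seq (bool * {poly C})) :
  ~~ sorted (fun u v : bool => u != v) (map fst s) ->
  exists s1 b p q s2, s = s1 ++ (b, p) :: (b, q) :: s2.
Proof.
elim: s => [|[b p] s IH] //=.
case: s IH => [|[b' q] s] IH //=.
rewrite negb_and => /orP [|].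
  by rewrite negbK => /eqP <-; exists [::], b, p, q, s.
move/IH => [s1 [b1 [p1 [q1 [s2 ->]]]]].
by exists ((b, p) :: s1), b1, p1, q1, s2.
Qed.

Definition freeP (A : algType C) (phi : {scalar A}) (x : bool -> A) :=
  phi 1 = 1 /\ free_pair phi x.

Lemma free_zero (A : algType C) (phi : {scalar A}) (x : bool -> A) s :
  free_pair phi x -> s != [::] ->
  sorted (fun u v : bool => u != v) (map fst s) ->
  (forall q, q \in s -> phi (ev (x q.1) q.2) = 0) ->
  phi (wprod x s) = 0.
Proof.
move=> fr sn0 so cen.
pose d := (false, 0 : {poly C}).
have -> : wprod x s = \prod_(l < size s) ev (x (nth d s l).1) (nth d s l).2.
  by rewrite /wprod (big_nth d) big_mkord.
apply: (fr (size s) (fun l => (nth d s l).1) (fun l => ev (x (nth d s l).1) (nth d s l).2)).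
- by rewrite lt0n size_eq0.
- move=> l hl; split.
    by exists (size (nth d s l).2), (fun k => (nth d s l).2`_k); rewrite evE.
  by apply: cen; rewrite mem_nth.
- move=> l hl; move/sortedP: so => /(_ false l); rewrite size_map => /(_ hl).
  by rewrite !(nth_map d) //; apply: ltnW.
Qed.

Lemma free_determined (A1 A2 : algType C) (phi1 : {scalar A1}) (phi2 : {scalar A2})
  (x1 : bool -> A1) (x2 : bool -> A2) :
  freeP phi1 x1 -> freeP phi2 x2 ->
  (forall b n, phi1 (x1 b ^+ n) = phi2 (x2 b ^+ n)) ->
  forall s, phi1 (wprod x1 s) = phi2 (wprod x2 s).
Proof.
move=> [one1 fr1] [one2 fr2] hm.
have hev : forall b p, phi1 (ev (x1 b) p) = phi2 (ev (x2 b) p).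
  by move=> b; apply: ev_mom.
move=> s; move: {2}(size s) (leqnn (size s)) => n; elim: n s => [|n IHn] s.
  by rewrite leqn0 size_eq0 => /eqP ->; rewrite !wprod_nil one1 one2.
move=> hs.
have [so|nso] := boolP (sorted (fun u v : bool => u != v) (map fst s)); last first.
  move: hs; move: (not_sorted_split nso) => [s1 [b [p [q [s2 ->]]]]] hs.
  have e : forall (A : algType C) (x : bool -> A), wprod x (s1 ++ (b, p) :: (b, q) :: s2) =
     wprod x (s1 ++ (b, p * q) :: s2).
    by move=> A x; rewrite !wprod_cat !wprod_cons /= /ev rmorphM /= !mulrA.
  rewrite !e; apply: IHn; move: hs; rewrite !size_cat /=; lia.
(* inner induction on the number of non-centered letters *)
move: {2}(count (fun q => phi1 (ev (x1 q.1) q.2) != 0) s) (erefl (count (fun q => phi1 (ev (x1 q.1) q.2) != 0) s)) => k.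
elim: k s hs so => [|k IHk] s hs so hk.
  case: (eqVneq s [::]) => [->|sn0]; first by rewrite !wprod_nil one1 one2.
  have cen1 : forall q, q \in s -> phi1 (ev (x1 q.1) q.2) = 0.
    move=> q qs; apply/eqP; apply: contraT => hq.
    have : (0 < count (fun q => phi1 (ev (x1 q.1) q.2) != 0%R) s)%N.
      by rewrite -has_count; apply/hasP; exists q.
    by rewrite hk.
  rewrite !free_zero //; move=> q qs; rewrite -hev; exact: cen1.
have : has (fun q => phi1 (ev (x1 q.1) q.2) != 0) s by rewrite has_count hk.
move/hasP => [[b p] ps /= hp].
move: hs so hk; case/splitPr: ps => s1 s2 hs so hk.
set m := phi1 (ev (x1 b) p).
have dec : forall (A : algType C) (x : bool -> A), wprod x (s1 ++ (b, p) :: s2) =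
   wprod x (s1 ++ (b, p - m%:P) :: s2) + m *: wprod x (s1 ++ s2).
  move=> A x; rewrite !wprod_cat !wprod_cons /= /ev rmorphB /= horner_algC.
  by rewrite mulrBl mulrBr mulr_algl -scalerAr subrK.
rewrite !dec !linearD !linearZ /=.
congr (_ + _ * _).
- apply: IHk.
  + by move: hs; rewrite !size_cat.
  + by move: so; rewrite !map_cat.
  + move: hk; rewrite !count_cat /= /ev rmorphB /= horner_algC linearB /= linearZ /= one1.
    rewrite -/(ev (x1 b) p) -/m mulr1 subrr eqxx /= hp /=; rewrite /ev; lia.
- apply: IHn; move: hs; rewrite !size_cat /=; lia.
Qed.

Lemma free_sum_moments (A1 A2 : algType C) (phi1 : {scalar A1}) (phi2 : {scalar A2})
  (x1 : bool -> A1) (x2 : bool -> A2) :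
  freeP phi1 x1 -> freeP phi2 x2 ->
  (forall b n, phi1 (x1 b ^+ n) = phi2 (x2 b ^+ n)) ->
  forall n, phi1 ((x1 false + x1 true) ^+ n) = phi2 ((x2 false + x2 true) ^+ n).
Proof.
move=> h1 h2 hm n.
suff : forall s, phi1 (wprod x1 s * (x1 false + x1 true) ^+ n) =
                 phi2 (wprod x2 s * (x2 false + x2 true) ^+ n).
  by move/(_ [::]); rewrite !wprod_nil !mul1r.
elim: n => [|n IH] s; first by rewrite !expr0 !mulr1; apply: free_determined.
have e : forall (A : algType C) (x : bool -> A),
  wprod x s * (x false + x true) ^+ n.+1 =
  wprod x (rcons s (false, 'X)) * (x false + x true) ^+ n +
  wprod x (rcons s (true, 'X)) * (x false + x true) ^+ n.
  move=> A x; rewrite -!cats1 !wprod_cat !wprod_cons !wprod_nil /= /ev !horner_algX !mulr1.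
  by rewrite exprS mulrA mulrDr mulrDl.
by rewrite !e !linearD /= !IH.
Qed.
End PartA.


Section PartB.
Variables (C : fieldType) (A : algType C) (F : lmodType C) (phi : {scalar A})
  (mulF : F -> F -> F) (lact : A -> F -> F) (ract : F -> A -> F) (Phi : {scalar F}).
Hypothesis ax : ncpsB'_axioms phi mulF lact ract.

Lemma phi1 : phi 1 = 1. Proof. by case: ax. Qed.
Lemma mulFA f g h : mulF f (mulF g h) = mulF (mulF f g) h.
Proof. by case: ax => _ [H] _. Qed.
Lemma mulFDl c f g h : mulF (c *: f + g) h = c *: mulF f h + mulF g h.
Proof. by case: ax => _ [_ [H]] _. Qed.
Lemma mulFDr c f g h : mulF f (c *: g + h) = c *: mulF f g + mulF f h.
Proof. by case: ax => _ [_ [_ [H]]] _. Qed.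
Lemma lact1 f : lact 1 f = f.
Proof. by case: ax => _ [_ [_ [_ [H]]]] _. Qed.
Lemma lactM a b f : lact (a * b) f = lact a (lact b f).
Proof. by case: ax => _ [_ [_ [_ [_ [H]]]]] _. Qed.
Lemma ract1 f : ract f 1 = f.
Proof. by case: ax => _ [_ [_ [_ [_ [_ [H]]]]]] _. Qed.
Lemma ractM a b f : ract f (a * b) = ract (ract f a) b.
Proof. by case: ax => _ [_ [_ [_ [_ [_ [_ [H]]]]]]] _. Qed.
Lemma lract a b f : lact a (ract f b) = ract (lact a f) b.
Proof. by case: ax => _ [_ [_ [_ [_ [_ [_ [_ [H]]]]]]]] _. Qed.
Lemma lactDl c a b f : lact (c *: a + b) f = c *: lact a f + lact b f.
Proof. by case: ax => _ [_ [_ [_ [_ [_ [_ [_ [_ [H]]]]]]]]] _. Qed.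
Lemma lactDr c a f g : lact a (c *: f + g) = c *: lact a f + lact a g.
Proof. by case: ax => _ [_ [_ [_ [_ [_ [_ [_ [_ [_ [H]]]]]]]]]] _. Qed.
Lemma ractDr c a b f : ract f (c *: a + b) = c *: ract f a + ract f b.
Proof. by case: ax => _ [_ [_ [_ [_ [_ [_ [_ [_ [_ [_ [H]]]]]]]]]]] _. Qed.
Lemma ractDl c a f g : ract (c *: f + g) a = c *: ract f a + ract g a.
Proof. by case: ax => _ [_ [_ [_ [_ [_ [_ [_ [_ [_ [_ [_ [H]]]]]]]]]]]] _. Qed.
Lemma lact_mulF a f g : lact a (mulF f g) = mulF (lact a f) g.
Proof. by case: ax => _ [_ [_ [_ [_ [_ [_ [_ [_ [_ [_ [_ [_ [H]]]]]]]]]]]]] _. Qed.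
Lemma ract_mulF a f g : ract (mulF f g) a = mulF f (ract g a).
Proof. by case: ax => _ [_ [_ [_ [_ [_ [_ [_ [_ [_ [_ [_ [_ [_ [H]]]]]]]]]]]]]] _. Qed.
Lemma mulF_ract a f g : mulF (ract f a) g = mulF f (lact a g).
Proof. by case: ax => _ [_ [_ [_ [_ [_ [_ [_ [_ [_ [_ [_ [_ [_ [_ H]]]]]]]]]]]]]]. Qed.

Lemma lactD a f g : lact a (f + g) = lact a f + lact a g.
Proof. by rewrite -[f in LHS]scale1r lactDr scale1r. Qed.
Lemma lact0 a : lact a 0 = 0.
Proof. have := lactD a 0 0; rewrite addr0 => e; apply: (addrI (lact a 0)); by rewrite addr0 -e. Qed.
Lemma lact0l f : lact 0 f = 0.
Proof. have := lactDl 1 0 0 f; rewrite !scale1r !addr0 => e; apply: (addrI (lact 0 f)); by rewrite addr0 -e. Qed.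
Lemma ractD a f g : ract (f + g) a = ract f a + ract g a.
Proof. by rewrite -[f in LHS]scale1r ractDl scale1r. Qed.
Lemma ract0 a : ract 0 a = 0.
Proof. have := ractD a 0 0; rewrite addr0 => e; apply: (addrI (ract 0 a)); by rewrite addr0 -e. Qed.
Lemma ract0r f : ract f 0 = 0.
Proof. have := ractDr 1 0 0 f; rewrite !scale1r !addr0 => e; apply: (addrI (ract f 0)); by rewrite addr0 -e. Qed.
Lemma mulFDr' f g h : mulF f (g + h) = mulF f g + mulF f h.
Proof. by rewrite -[g in LHS]scale1r mulFDr scale1r. Qed.
Lemma mulF0 f : mulF f 0 = 0.
Proof. have := mulFDr' f 0 0; rewrite addr0 => e; apply: (addrI (mulF f 0)); by rewrite addr0 -e. Qed.
Lemma mulFDl' f g h : mulF (f + g) h = mulF f h + mulF g h.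
Proof. by rewrite -[f in LHS]scale1r mulFDl scale1r. Qed.

Lemma lact_sum a I (r : seq I) (P : pred I) (G : I -> F) :
  lact a (\sum_(i <- r | P i) G i) = \sum_(i <- r | P i) lact a (G i).
Proof. exact: (big_morph (lact a) (lactD a) (lact0 a)). Qed.
Lemma mulF_sum f I (r : seq I) (P : pred I) (G : I -> F) :
  mulF f (\sum_(i <- r | P i) G i) = \sum_(i <- r | P i) mulF f (G i).
Proof. exact: (big_morph (mulF f) (mulFDr' f) (mulF0 f)). Qed.


Lemma ualg2_1 (a : bool -> A) : in_ualg2 a 1.
Proof. by exists [:: (1, [::])]; rewrite big_seq1 /= big_nil scale1r. Qed.
Lemma ualg2_D (a : bool -> A) x y : in_ualg2 a x -> in_ualg2 a y -> in_ualg2 a (x + y).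
Proof. by move=> [s1 ->] [s2 ->]; exists (s1 ++ s2); rewrite big_cat. Qed.
Lemma ualg2_Ml (a : bool -> A) b x : in_ualg2 a x -> in_ualg2 a (a b * x).
Proof.
move=> [s ->]; exists [seq (p.1, b :: p.2) | p <- s].
rewrite big_map mulr_sumr; apply: eq_bigr => p _ /=.
by rewrite big_cons scalerAr.
Qed.

Lemma alg2F_sum (f : bool -> F) : in_alg2F mulF f (f false + f true).
Proof.
exists [:: (1, (false, [::])); (1, (true, [::]))].
by rewrite big_cons big_seq1 /= !scale1r.
Qed.

Section Fixed.
Variables (a : bool -> A) (f : bool -> F).
Hypothesis cyc : cyc_antimonotone mulF lact ract phi Phi a f.

Let aa := a false + a true.
Let ff := f false + f true.

Lemma ualg2_pow n : in_ualg2 a (aa ^+ n).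
Proof.
elim: n => [|n IH]; first by rewrite expr0; apply: ualg2_1.
by rewrite exprS mulrDl; apply: ualg2_D; apply: ualg2_Ml.
Qed.

Definition pre (ctx : seq A) (y : F) : F := foldr (fun c y => mulF (ract ff c) y) y ctx.

Lemma pre_rcons ctx c y : pre (rcons ctx c) y = pre ctx (mulF (ract ff c) y).
Proof. by rewrite /pre foldr_rcons. Qed.

Lemma preD ctx x y : pre ctx (x + y) = pre ctx x + pre ctx y.
Proof. by elim: ctx => [|c ctx IH] //=; rewrite IH mulFDr'. Qed.
Lemma pre0 ctx : pre ctx 0 = 0.
Proof. by elim: ctx => [|c ctx IH] //=; rewrite IH mulF0. Qed.
Lemma pre_sum ctx I (r : seq I) (P : pred I) (G : I -> F) :
  pre ctx (\sum_(i <- r | P i) G i) = \sum_(i <- r | P i) pre ctx (G i).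
Proof. exact: (big_morph (pre ctx) (preD ctx) (pre0 ctx)). Qed.

Definition rho (j : nat) : C := Phi (fpowS mulF ff j).

Lemma altF_pre ctx d (c : nat -> A) k :
  (forall l, (k <= l)%N -> c l = nth d ctx (l - k)) ->
  altF mulF ract c (fun _ => ff) k (size ctx) = pre ctx (ract ff d).
Proof.
elim: ctx k => [|x ctx IH] k hc /=.
  by rewrite hc // subnn.
rewrite (IH k.+1); last by move=> l hl; rewrite hc ?(ltnW hl) //; have -> : (l - k = (l - k.+1).+1)%N by lia.
by rewrite hc // subnn.
Qed.

Lemma gprod_const k m : gprod mulF (fun _ => ff) k m = fpowS mulF ff m.
Proof. by elim: m k => [|m IH] k //=; rewrite IH. Qed.

Lemma cyclic ctx c0 d :
  in_ualg2 a c0 -> in_ualg2 a d -> (forall c, c \in ctx -> in_ualg2 a c) ->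
  Phi (lact c0 (pre ctx (ract ff d))) =
  phi (c0 * d) * (\prod_(c <- ctx) phi c) * rho (size ctx).
Proof.
move=> h0 hd hctx.
pose c := fun l => if l == 0%N then c0 else nth d ctx l.-1.
have := @cyc (size ctx) c (fun _ => ff).
rewrite (@altF_pre _ d) => [|l hl]; last by rewrite /c; case: l hl => //= l _; rewrite subn1.
rewrite gprod_const /c /= nth_default // => -> //.
- congr (_ * _ * _).
  by rewrite big_add1 /= (big_nth d).
- move=> l _; case: l => [|l] //=.
  case: (ltnP l (size ctx)) => hl; first by apply: hctx; rewrite mem_nth.
  by rewrite nth_default.
- by move=> l _; apply: alg2F_sum.
Qed.


Definition Tn n := (powB mulF lact ract (aa, ff) n).2.
Lemma powB1 n : (powB mulF lact ract (aa, ff) n).1 = aa ^+ n.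
Proof. by elim: n => [|n IH] //=; rewrite /powB /= in IH *; rewrite IH exprS. Qed.
Lemma T_S n : Tn n.+1 = lact aa (Tn n) + ract ff (aa ^+ n) + mulF ff (Tn n).
Proof. by rewrite /Tn -powB1. Qed.

Definition Vn m := ract ff (aa ^+ m) + mulF ff (Tn m).

Lemma T_V m : Tn m = \sum_(i < m) lact (aa ^+ i) (Vn (m.-1 - i)).
Proof.
elim: m => [|m IH]; first by rewrite big_ord0.
rewrite T_S -addrA -/(Vn m) big_ord_recl expr0 lact1 subn0 /= addrC; congr (_ + _).
rewrite IH lact_sum; apply: eq_bigr => i _.
by rewrite exprS lactM /=; congr (lact _ (lact _ (Vn _))); rewrite /bump /=; lia.
Qed.

Lemma V_rec m : Vn m = ract ff (aa ^+ m) +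
  \sum_(i < m) mulF (ract ff (aa ^+ i)) (Vn (m.-1 - i)).
Proof.
rewrite {1}/Vn T_V mulF_sum; congr (_ + _); apply: eq_bigr => i _.
by rewrite mulF_ract.
Qed.

Variable N : nat.
Definition mua i := phi (aa ^+ i).
Definition Mp : {poly C} := \poly_(i < N.+1) mua i.
Definition Kp j : {poly C} := \sum_(k < N.+1) rho (j + k) *: ('X * Mp) ^+ k.
Definition Cp c0 : {poly C} := \poly_(s < N.+1) phi (c0 * aa ^+ s).

Lemma Kp_rec j : Kp j = (rho j)%:P + 'X * Mp * Kp j.+1 - rho (j + N.+1) *: ('X * Mp) ^+ N.+1.
Proof.
rewrite /Kp big_ord_recl addn0 expr0 -alg_polyC -addrA; congr (_ + _).
rewrite mulr_sumr big_ord_recr /= -scalerAr -exprS addSn -addnS addrK; apply: eq_bigr => i _.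
by rewrite /bump /= add1n addnS addSn -scalerAr -exprS.
Qed.

Lemma Vclaim m : (m <= N)%N -> forall ctx c0,
  in_ualg2 a c0 -> (forall c, c \in ctx -> in_ualg2 a c) ->
  Phi (lact c0 (pre ctx (Vn m))) = (\prod_(c <- ctx) phi c) * (Cp c0 * Kp (size ctx))`_m.
Proof.
elim/ltn_ind: m => m IH hmN ctx c0 h0 hctx.
rewrite V_rec preD lactD linearD (cyclic h0 (ualg2_pow m) hctx) pre_sum lact_sum linear_sum /=.
rewrite (Kp_rec (size ctx)) !mulrDr !coefD mulrN coefN.
have -> : (Cp c0 * (rho (size ctx + N.+1) *: ('X * Mp) ^+ N.+1))`_m = 0.
  rewrite exprMn -scalerAr coefZ mulrCA coefXnM.
  by rewrite ifT ?mulr0 // ltnS.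
rewrite subr0 coefMC {1}/Cp coef_poly ltnS hmN mulrDr.
have -> : Cp c0 * ('X * Mp * Kp (size ctx).+1) = 'X * (Mp * (Cp c0 * Kp (size ctx).+1)).
  by rewrite mulrCA -!mulrA; congr (_ * _); rewrite mulrCA.
rewrite coefXM; case: m IH hmN => [|m] IH hmN.
  by rewrite big_ord0 mulr0 addr0; ring.
rewrite /= coefM mulr_sumr; congr (_ + _); first by ring.
apply: eq_bigr => i _.
have h1 : (m - i < m.+1)%N by lia.
have h2 : (m - i <= N)%N by lia.
have h3 : forall c, c \in rcons ctx (aa ^+ i) -> in_ualg2 a c.
  by move=> c; rewrite mem_rcons inE => /orP [/eqP ->|]; [apply: ualg2_pow | apply: hctx].
rewrite -pre_rcons (IH _ h1 h2 _ _ h0 h3).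
rewrite big_rcons /= size_rcons /Mp coef_poly ifT; last by have := ltn_ord i; lia.
rewrite /mua; ring.
Qed.


Lemma sum_le_const (x : C) n q :
  \sum_(i < n) (if (i <= q)%N then x else 0) = x *+ minn n q.+1.
Proof.
elim: n => [|n IH]; first by rewrite big_ord0 min0n.
rewrite big_ord_recr /= IH; case: leqP => h.
  by rewrite addrC -mulrS; congr (_ *+ _); lia.
by rewrite addr0; congr (_ *+ _); lia.
Qed.

Lemma PhiT n : (n <= N)%N ->
  Phi (Tn n) = ('X * ((Mp + 'X * Mp^`()) * Kp 0))`_n.
Proof.
move=> hn.
rewrite T_V linear_sum /= coefXM.
have e1 : forall i : 'I_n, Phi (lact (aa ^+ i) (Vn (n.-1 - i))) = (Cp (aa ^+ i) * Kp 0)`_(n.-1 - i).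
  move=> i; rewrite (_ : Vn _ = pre [::] (Vn (n.-1 - i))) //.
  rewrite (@Vclaim (n.-1 - i)) ?big_nil ?mul1r //; last by apply: ualg2_pow.
  by have := ltn_ord i; lia.
under eq_bigr => i _ do rewrite e1.
case: n hn e1 => [|n] hn e1; first by rewrite big_ord0.
rewrite /=.
have e : forall i : 'I_n.+1, (Cp (aa ^+ i) * Kp 0)`_(n - i) = ('X^i * Cp (aa ^+ i) * Kp 0)`_n.
  by move=> i; rewrite -mulrA coefXnM ltnNge -ltnS ltn_ord.
under eq_bigr => i _ do rewrite e.
rewrite -coef_sum -mulr_suml !coefM; apply: eq_bigr => j _.
congr (_ * _).
rewrite coef_sum coefD coefXM coef_deriv /Mp coef_poly.
have hj : (j < N.+1)%N by have := ltn_ord j; lia.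
rewrite hj.
under eq_bigr => i _ do rewrite coefXnM /Cp coef_poly ltnNge.
have -> : \sum_(i < n.+1) (if ~~ (i <= j)%N then 0 else
     if (j - i < N.+1)%N then phi (aa ^+ i * aa ^+ (j - i)) else 0) =
     \sum_(i < n.+1) (if (i <= j)%N then mua j else 0).
  apply: eq_bigr => i _; case: (leqP i j) => hij //=.
  rewrite ifT; last by lia.
  by rewrite /mua -exprD subnKC.
rewrite sum_le_const.
have -> : minn n.+1 j.+1 = j.+1 by have := ltn_ord j; lia.
move: hj; case: (nat_of_ord j) => [|j'] hj' /=; first by rewrite addr0.
rewrite coef_poly hj'.
by rewrite mulrS.
Qed.
End Fixed.
End PartB.


Section PartC.
Variables (C : fieldType) (F : lmodType C) (mulF : F -> F -> F) (Phi : {scalar F}).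
Hypothesis mulFA : forall f g h, mulF f (mulF g h) = mulF (mulF f g) h.
Hypothesis mulFDl : forall (c : C) f g h, mulF (c *: f + g) h = c *: mulF f h + mulF g h.
Hypothesis mulFDr : forall (c : C) f g h, mulF f (c *: g + h) = c *: mulF f g + mulF f h.

Lemma mulFDr1 f g h : mulF f (g + h) = mulF f g + mulF f h.
Proof. by rewrite -[g in LHS]scale1r mulFDr scale1r. Qed.
Lemma mulFDl1 f g h : mulF (f + g) h = mulF f h + mulF g h.
Proof. by rewrite -[f in LHS]scale1r mulFDl scale1r. Qed.
Lemma mulF0r f : mulF f 0 = 0.
Proof. have := mulFDr1 f 0 0; rewrite addr0 => e; apply: (addrI (mulF f 0)); by rewrite addr0 -e. Qed.
Lemma mulF0l f : mulF 0 f = 0.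
Proof. have := mulFDl1 0 0 f; rewrite addr0 => e; apply: (addrI (mulF 0 f)); by rewrite addr0 -e. Qed.
Lemma mulFZl c f h : mulF (c *: f) h = c *: mulF f h.
Proof. by rewrite -[c *: f]addr0 mulFDl mulF0l addr0. Qed.

Lemma fpowS_r (g : F) k : mulF (fpowS mulF g k) g = fpowS mulF g k.+1.
Proof. elim: k => [|k IH] //=; by rewrite -mulFA IH. Qed.

Lemma alg1F_mulr (g h : F) : in_alg1F mulF g h -> in_alg1F mulF g (mulF h g).
Proof.
move=> [n [c ->]]; exists n.+1, (fun k => if k is k'.+1 then c k' else 0).
rewrite big_ord_recl scale0r add0r.
rewrite (big_morph (fun x => mulF x g) (fun x y => mulFDl1 x y g) (mulF0l g)).
by apply: eq_bigr => i _; rewrite mulFZl fpowS_r.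
Qed.

Lemma alg1F_self (g : F) : in_alg1F mulF g g.
Proof. by exists 1%N, (fun _ => 1); rewrite big_ord1 scale1r. Qed.

Fixpoint gpre (g : nat -> F) (k p : nat) (y : F) : F :=
  match p with 0 => y | p'.+1 => mulF (g k) (gpre g k.+1 p' y) end.

Lemma gprod_gpre g k p : gprod mulF g k p = gpre g k p (g (k + p)%N).
Proof. by elim: p k => [|p IH] k /=; rewrite ?addn0 // IH addSnnS. Qed.

Lemma gpre_ext g g' k p y : (forall l, (k <= l < k + p)%N -> g l = g' l) -> gpre g k p y = gpre g' k p y.
Proof.
elim: p k => [|p IH] k h //=.
rewrite h; last by lia.
by rewrite (IH k.+1) // => l hl; apply: h; lia.
Qed.

Lemma gpre_snoc g k p y : gpre g k p (mulF (g (k + p)%N) y) = gpre g k p.+1 y.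
Proof. by elim: p k => [|p IH] k /=; rewrite ?addn0 // -addSnnS IH. Qed.

Lemma gpreD g k p x y : gpre g k p (x + y) = gpre g k p x + gpre g k p y.
Proof. by elim: p k => [|p IH] k //=; rewrite IH mulFDr1. Qed.

Section Triv.
Variable f : bool -> F.
Hypothesis triv : trivially_indep mulF Phi f.
Let ff := f false + f true.

Lemma Z_vanish p idx g : (0 < p)%N ->
  (forall l, (l <= p)%N -> in_alg1F mulF (f (idx l)) (g l)) ->
  (forall l, (l < p)%N -> idx l != idx l.+1) ->
  Phi (gpre g 0 p (g p)) = 0.
Proof.
case: p => [|m] // _ h1 h2.
by rewrite -(gprod_gpre g 0 m.+1); apply: (@triv m idx g) => l hl; [apply: h1|apply: h2].
Qed.

Definition upd (T : Type) (g : nat -> T) (p : nat) (x : T) := fun l => if l == p then x else g l.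

Lemma ff_split (i : bool) : ff = f i + f (~~ i).
Proof. by rewrite /ff; case: i => //=; rewrite addrC. Qed.

Lemma claim j p idx g :
  (forall l, (l <= p)%N -> in_alg1F mulF (f (idx l)) (g l)) ->
  (forall l, (l < p)%N -> idx l != idx l.+1) ->
  Phi (gpre g 0 p (mulF (g p) (fpowS mulF ff j))) =
  if p == 0%N then Phi (mulF (g 0%N) (fpowS mulF (f (idx 0%N)) j)) else 0.
Proof.
elim: j p idx g => [|j IH] p idx g h1 h2.
- rewrite /= (ff_split (idx p)) mulFDr1 gpreD linearD /=.
  pose g1 := upd g p (mulF (g p) (f (idx p))).
  have e1 : gpre g 0 p (mulF (g p) (f (idx p))) = gpre g1 0 p (g1 p).
    rewrite /g1 /upd eqxx; apply: gpre_ext => l hl; rewrite ifF //; apply/eqP; lia.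
  pose g2 := upd g p.+1 (f (~~ idx p)).
  pose idx2 := upd idx p.+1 (~~ idx p).
  have e2 : gpre g 0 p (mulF (g p) (f (~~ idx p))) = gpre g2 0 p.+1 (g2 p.+1).
    rewrite /g2 /upd eqxx -gpre_snoc add0n ifF; last by apply/eqP; lia.
    apply: gpre_ext => l hl; rewrite ifF //; apply/eqP; lia.
  have z2 : Phi (gpre g2 0 p.+1 (g2 p.+1)) = 0.
    apply: (@Z_vanish _ idx2) => // l hl; rewrite /g2 /idx2 /upd.
    + case: eqP => hne; first exact: alg1F_self.
      by apply: h1; lia.
    + have hl1 : (l == p.+1) = false by apply/eqP; lia.
      rewrite hl1 eqSS; case: (eqVneq l p) => [->|hne]; first by case: (idx p).
      by apply: h2; lia.
  rewrite e2 z2 addr0 e1.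
  case: eqP => hp.
    by rewrite /g1 /upd hp /=.
  apply: (@Z_vanish _ idx); first by lia.
  + move=> l hl; rewrite /g1 /upd; case: eqP => [->|_]; last exact: h1.
    by apply: alg1F_mulr; apply: h1.
  + exact: h2.
- rewrite /= {1}(ff_split (idx p)) mulFDl1 mulFDr1 gpreD linearD /=.
  rewrite mulFA.
  pose g1 := upd g p (mulF (g p) (f (idx p))).
  have e1 : gpre g 0 p (mulF (mulF (g p) (f (idx p))) (fpowS mulF ff j)) =
            gpre g1 0 p (mulF (g1 p) (fpowS mulF ff j)).
    rewrite /g1 /upd eqxx; apply: gpre_ext => l hl; rewrite ifF //; apply/eqP; lia.
  pose g2 := upd g p.+1 (f (~~ idx p)).
  pose idx2 := upd idx p.+1 (~~ idx p).
  have e2 : gpre g 0 p (mulF (g p) (mulF (f (~~ idx p)) (fpowS mulF ff j))) =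
            gpre g2 0 p.+1 (mulF (g2 p.+1) (fpowS mulF ff j)).
    rewrite /g2 /upd eqxx -gpre_snoc add0n ifF; last by apply/eqP; lia.
    apply: gpre_ext => l hl; rewrite ifF //; apply/eqP; lia.
  have z2 : Phi (gpre g2 0 p.+1 (mulF (g2 p.+1) (fpowS mulF ff j))) = 0.
    rewrite (@IH _ idx2) // => l hl; rewrite /g2 /idx2 /upd.
    + case: eqP => hne; first exact: alg1F_self.
      by apply: h1; lia.
    + have hl1 : (l == p.+1) = false by apply/eqP; lia.
      rewrite hl1 eqSS; case: (eqVneq l p) => [->|hne]; first by case: (idx p).
      by apply: h2; lia.
  rewrite e2 z2 addr0 e1 (@IH _ idx).
  + case: eqP => hp //.
    by rewrite /g1 /upd hp /= -mulFA.
  + move=> l hl; rewrite /g1 /upd; case: eqP => [->|_]; last exact: h1.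
    by apply: alg1F_mulr; apply: h1.
  + exact: h2.
Qed.

Lemma rho_split j : Phi (fpowS mulF ff j) = Phi (fpowS mulF (f false) j) + Phi (fpowS mulF (f true) j).
Proof.
case: j => [|j] /=; first by rewrite linearD.
rewrite {1}/ff mulFDl1 linearD.
have := @claim j 0 (fun _ => false) (fun _ => f false).
have := @claim j 0 (fun _ => true) (fun _ => f true).
by rewrite /= => -> // => [| l]; [move=> -> //= => l|]; rewrite ?leqn0 => *; apply: alg1F_self.
Qed.

End Triv.
End PartC.


Section Cong.
Variables (C : fieldType) (B : nat).
Definition cong (p q : {poly C}) := exists h, p = q + 'X^B * h.

Lemma congR p : cong p p. Proof. by exists 0; rewrite mulr0 addr0. Qed.
Lemma congS p q : cong p q -> cong q p.
Proof. by move=> [h ->]; exists (- h); rewrite mulrN addrK. Qed.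
Lemma congT p q r : cong p q -> cong q r -> cong p r.
Proof. by move=> [h1 ->] [h2 ->]; exists (h2 + h1); rewrite mulrDr addrA. Qed.
Lemma congD p1 q1 p2 q2 : cong p1 q1 -> cong p2 q2 -> cong (p1 + p2) (q1 + q2).
Proof. by move=> [h1 ->] [h2 ->]; exists (h1 + h2); ring. Qed.
Lemma congN p q : cong p q -> cong (- p) (- q).
Proof. by move=> [h ->]; exists (- h); ring. Qed.
Lemma congM p1 q1 p2 q2 : cong p1 q1 -> cong p2 q2 -> cong (p1 * p2) (q1 * q2).
Proof. by move=> [h1 ->] [h2 ->]; exists (h1 * q2 + q1 * h2 + 'X^B * h1 * h2); ring. Qed.
Lemma congZ c p q : cong p q -> cong (c *: p) (c *: q).
Proof. by move=> [h ->]; exists (c *: h); rewrite scalerDr scalerAr. Qed.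
Lemma congX p q k : cong p q -> cong (p ^+ k) (q ^+ k).
Proof. by move=> h; elim: k => [|k IH]; [rewrite !expr0; apply: congR | rewrite !exprS; apply: congM]. Qed.
Lemma cong_sum (I : Type) (r : seq I) (P : pred I) (G H : I -> {poly C}) :
  (forall i, P i -> cong (G i) (H i)) -> cong (\sum_(i <- r | P i) G i) (\sum_(i <- r | P i) H i).
Proof.
move=> h; elim: r => [|x r IH]; first by rewrite !big_nil; apply: congR.
rewrite !big_cons; case: ifP => // Px; apply: congD => //; exact: h.
Qed.
Lemma cong_coef (p q : {poly C}) i : cong p q -> (i < B)%N -> p`_i = q`_i.
Proof. by move=> [h ->] hi; rewrite coefD coefXnM hi addr0. Qed.
Lemma cong_of_coef (p q : {poly C}) : (forall i, (i < B)%N -> p`_i = q`_i) -> cong p q.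
Proof.
move=> h; exists (drop_poly B (p - q)).
have t0 : take_poly B (p - q) = 0.
  by apply/polyP => i; rewrite coef_take_poly coef0 coefB; case: ifP => // /h ->; rewrite subrr.
have e := poly_take_drop B (p - q); rewrite t0 add0r in e.
by rewrite mulrC e addrC subrK.
Qed.
Lemma cong_Xmul p q : cong p q -> cong ('X * p^`()) ('X * q^`()).
Proof.
have hX : forall n, 'X * ('X^(n.-1) *+ n) = ('X^n *+ n : {poly C}).
  by case => [|n]; rewrite ?mulr0n ?mulr0 // mulrnAr -exprS.
move=> [h ->]; exists (h *+ B + 'X * h^`()).
rewrite derivD derivM derivXn /= !mulrDr mulrA hX; congr (_ + _).
rewrite mulrnAl -mulrnAr; ring.
Qed.
End Cong.

Section Series.
Variable C : fieldType.

Lemma size_inv_seq (a : fps C) n : size (inv_seq a n) = n.+1.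
Proof. by elim: n => [|n IH] //=; rewrite size_rcons IH. Qed.

Lemma nth_inv_seq (a : fps C) n i : (i <= n)%N -> nth 0 (inv_seq a n) i = fps_inv a i.
Proof.
elim: n => [|n IH] hi; first by move: hi; rewrite leqn0 => /eqP ->.
rewrite /= nth_rcons size_inv_seq.
case: (ltngtP i n.+1) => h.
- by apply: IH.
- by move: hi; rewrite leqNgt h.
- by rewrite h /fps_inv /= nth_rcons size_inv_seq ltnn eqxx.
Qed.

Lemma fps_invS (a : fps C) n :
  fps_inv a n.+1 = - (a 0%N)^-1 * \sum_(i < n.+1) a i.+1 * fps_inv a (n - i)%N.
Proof.
rewrite {1}/fps_inv /= nth_rcons size_inv_seq ltnn eqxx; congr (_ * _).
by apply: eq_bigr => i _; rewrite nth_inv_seq ?leq_subr.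
Qed.

Lemma fps_mul_inv (a : fps C) n : a 0%N != 0 -> fps_mul a (fps_inv a) n = (n == 0%N)%:R.
Proof.
move=> a0; rewrite /fps_mul; case: n => [|n].
  by rewrite big_ord1 /fps_inv /= mulfV.
rewrite big_ord_recl fps_invS mulrA mulrN mulfV // mulN1r /=.
rewrite addrC; apply/eqP; rewrite subr_eq0; apply/eqP.
by apply: eq_bigr => i _; rewrite /bump /= add1n subSS.
Qed.

Definition tp (B : nat) (a : fps C) : {poly C} := \poly_(i < B) a i.

Lemma tp_coef_mul B (a b : fps C) i : (i < B)%N -> (tp B a * tp B b)`_i = fps_mul a b i.
Proof.
move=> hi; rewrite coefM; apply: eq_bigr => j _.
rewrite /tp !coef_poly ifT; last by have := ltn_ord j; lia.
by rewrite ifT //; lia.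
Qed.

Lemma cong_inv B (a : fps C) : a 0%N != 0 -> cong B (tp B a * tp B (fps_inv a)) 1.
Proof.
move=> a0; apply: cong_of_coef => i hi.
by rewrite tp_coef_mul // fps_mul_inv // coef1.
Qed.

Lemma iter_coef B (a : fps C) k i : (i < B)%N ->
  iter k (fps_mul a) (fun j => (j == 0%N)%:R) i = ((tp B a) ^+ k)`_i.
Proof.
elim: k i => [|k IH] i hi; first by rewrite expr0 coef1.
rewrite iterS exprS coefM /fps_mul; apply: eq_bigr => j _.
rewrite IH; last by lia.
by rewrite /tp coef_poly ifT //; have := ltn_ord j; lia.
Qed.

Lemma lpow1 (s : lser C) k : s.1 = 1 -> (lpow s k).1 = k%:Z.
Proof.
move=> h; elim: k => [|k IH] //=.
by rewrite /lpow /= in IH *; rewrite IH h -addn1 PoszD addrC.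
Qed.
Lemma lpow2 (s : lser C) k : (lpow s k).2 = iter k (fps_mul s.2) (fun j => (j == 0%N)%:R).
Proof. by elim: k => [|k IH] //=; rewrite /lpow /= in IH *; rewrite IH. Qed.

Lemma lcoef_pos (s : lser C) (k i : nat) : s.1 = k%:Z ->
  lcoef s i%:Z = if (k <= i)%N then s.2 (i - k)%N else 0.
Proof.
move=> e; rewrite /lcoef e; case: leqP => h; first by rewrite subzn.
case E: (i%:Z - k%:Z) => [j|j] //; exfalso; lia.
Qed.

Lemma sum_trunc (F : nat -> C) i n : (i <= n)%N -> (forall k, (i < k)%N -> F k = 0) ->
  \sum_(k < n.+1) F k = \sum_(k < i.+1) F k.
Proof.
move=> hi hF; elim: n hi => [|n IH] hi.
  by move: hi; rewrite leqn0 => /eqP ->.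
case: (ltngtP i n.+1) => h.
- by rewrite big_ord_recr /= hF // addr0 IH.
- by move: hi; rewrite leqNgt h.
- by rewrite h.
Qed.

Definition MpS (mu : fps C) N := tp N.+1 mu.
Definition KpS (mu rhoS : fps C) N j : {poly C} :=
  \sum_(k < N.+1) rhoS (j + k).+1 *: ('X * MpS mu N) ^+ k.

Lemma key B k (M N : {poly C}) : cong B (M * N) 1 ->
  cong B ('X ^+ 2 * (M + 'X * M^`()) * ('X * M) ^+ k) (('X * M) ^+ k.+2 * (N - 'X * N^`())).
Proof.
move=> c1; have c2 := cong_Xmul c1.
move: c1 c2 => [h1 e1] [h2 e2].
have d1 : (1 : {poly C})^`() = 0 by rewrite -polyC1 derivC.
rewrite d1 mulr0 add0r derivM mulrDr in e2.

set DM := 'X * M^`() in e2 *; set DN := 'X * N^`() in e2 *.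
have e2' : 'X * (M^`() * N) + 'X * (M * N^`()) = DM * N + M * DN.
  by rewrite /DM /DN; ring.
rewrite e2' {e2'} in e2.
exists ('X ^+ k * 'X ^+ 2 * (- M ^+ k * M * h1 + M ^+ k * M * h2 - M ^+ k * DM * h1)).
apply/eqP; rewrite -subr_eq0; apply/eqP.
rewrite !exprMn.
transitivity ('X ^+ k * 'X ^+ 2 * (- M ^+ k * M * (M * N - 1 - 'X^B * h1)
     + M ^+ k * M * (DM * N + M * DN - 'X^B * h2) - M ^+ k * DM * (M * N - 1 - 'X^B * h1))).
  by rewrite !exprS; ring.
by rewrite e1 e2; ring.
Qed.


Theorem series_main (mu nu rhoS : fps C) :
  mu 0%N = 1 -> rhoS 0%N = 0 ->
  (forall N n, (n <= N)%N ->
     nu n = ('X * ((MpS mu N + 'X * (MpS mu N)^`()) * KpS mu rhoS N 0))`_n) ->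
  forall m : int, lcoef (Gser nu) m = lcoef (lmul (Gcomp rhoS (Fser mu)) (lderz (Fser mu))) m.
Proof.
move=> mu0 rho0 hnu m.
case: m => [n|n]; last by rewrite /lcoef /=.
have hL : lcoef (Gser nu) n = ('X ^+ 2 * ((MpS mu n + 'X * (MpS mu n)^`()) * KpS mu rhoS n 0))`_n.
  rewrite (@lcoef_pos _ 1) //; case: (n) => [|n'] /=.
    by rewrite coefXnM.
  rewrite subn1 /= (hnu n'.+1) // [in RHS]coefXnM [in LHS]coefXM; case: (n') => [|k] //=; by rewrite !subSS subn0.
have eR : lcoef (lmul (Gcomp rhoS (Fser mu)) (lderz (Fser mu))) n =
   fps_mul (Gcomp rhoS (Fser mu)).2 (lderz (Fser mu)).2 n.
  by rewrite (@lcoef_pos _ 0) //= subn0.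
rewrite eR {eR}.
set B := n.+1.
set M := tp B mu; set Nn := tp B (fps_inv mu); set Q := tp B (fps_inv (fps_inv mu)).
have mu0' : mu 0%N != 0 by rewrite mu0 oner_neq0.
have cMN : cong B (M * Nn) 1 by apply: cong_inv.
have cNQ : cong B (Nn * Q) 1.
  by apply: cong_inv; rewrite /fps_inv /= mu0 invr1 oner_neq0.
have cQM : cong B Q M.
  apply: (@congT _ _ _ (M * (Nn * Q))); last by rewrite -[M in cong _ _ M]mulr1; apply: congM => //; apply: congR.
  rewrite mulrA -[Q in cong _ Q _]mul1r; apply: congM (congR _ _); exact: congS.
pose G := \sum_(k < B) rhoS k *: ('X * Q) ^+ k.+1.
pose D := Nn - 'X * Nn^`().
have hgc : forall i, (i < B)%N -> (Gcomp rhoS (Fser mu)).2 i = G`_i.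
  move=> i hi; rewrite /G coef_sum /B (@sum_trunc (fun k => (rhoS k *: ('X * Q) ^+ k.+1)`_i) i n) //; last first.
    by move=> k hk; rewrite coefZ exprMn coefXnM ifT ?mulr0 //; lia.
  apply: eq_bigr => k _; rewrite coefZ (@lcoef_pos _ k.+1); last by apply: lpow1.
  rewrite exprMn coefXnM lpow2 ltnS; case: (ltnP k i) => hk; rewrite ?mulr0 //.
  by rewrite (@iter_coef B) //; rewrite /B; lia.
have hdd : forall i, (i < B)%N -> (lderz (Fser mu)).2 i = D`_i.
  move=> i hi; rewrite /D coefB coefXM coef_deriv /Nn /tp !coef_poly hi /=.
  case: i hi => [|i] hi /=.
    by rewrite addr0 subr0 intrN mulr1z opprK mul1r.
  rewrite ifT; last by lia.
  rewrite intrD intrN mulr1z -mulr_natl; ring.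
have -> : fps_mul (Gcomp rhoS (Fser mu)).2 (lderz (Fser mu)).2 n = (G * D)`_n.
  rewrite -(tp_coef_mul (B := B)) //; apply: (@cong_coef _ B) => //.
  by apply: congM; apply: cong_of_coef => i hi; rewrite /tp coef_poly hi; [apply: hgc|apply: hdd].
rewrite hL; symmetry; apply: (@cong_coef _ B) => //.
pose G' := \sum_(k < B) rhoS k *: ('X * M) ^+ k.+1.
apply: (@congT _ _ _ (G' * D)).
  apply: congM (congR _ _); apply: cong_sum => k _; apply: congZ; apply: congX.
  exact: (congM (congR _ _) cQM).
have -> : G' = \sum_(k < n) rhoS k.+1 *: ('X * M) ^+ k.+2.
  by rewrite /G' /B big_ord_recl rho0 scale0r add0r.
rewrite mulr_suml.
have -> : 'X ^+ 2 * ((MpS mu n + 'X * (MpS mu n)^`()) * KpS mu rhoS n 0) =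
   \sum_(k < n) rhoS k.+1 *: ('X ^+ 2 * (M + 'X * M^`()) * ('X * M) ^+ k) +
   rhoS n.+1 *: ('X ^+ 2 * (M + 'X * M^`()) * ('X * M) ^+ n).
  rewrite /KpS big_ord_recr /= mulrDr mulr_sumr mulrDr mulr_sumr; congr (_ + _).
    by apply: eq_bigr => k _; rewrite -!scalerAr mulrA.
  by rewrite -!scalerAr mulrA.
apply: congS; rewrite -[X in cong _ _ X]addr0; apply: congD.
  apply: cong_sum => k _; rewrite -scalerAl; apply: congZ; apply: key; exact: cMN.
exists (rhoS n.+1 *: ('X * (M + 'X * M^`()) * M ^+ n)); rewrite add0r -scalerAr.
by congr (_ *: _); rewrite exprMn /B (exprS 'X n); ring.
Qed.

End Series.

Unset Implicit Arguments. Set Strict Implicit.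

Lemma powB0f (C : fieldType) (A : algType C) (F : lmodType C) (phi : {scalar A})
  (mulF : F -> F -> F) (lact : A -> F -> F) (ract : F -> A -> F) (g : F) k :
  ncpsB'_axioms phi mulF lact ract ->
  (powB mulF lact ract (0, g) k.+1).2 = fpowS mulF g k.
Proof.
move=> ax.
have h1 : forall k, (powB mulF lact ract (0, g) k.+1).1 = 0.
  by move=> j; rewrite /powB /= mul0r.
elim: k => [|k IH].
  by rewrite /powB /= (lact0l ax) (ract1 ax) (mulF0 ax) add0r addr0.
rewrite (_ : powB mulF lact ract (0, g) k.+2 = mulB mulF lact ract (0, g) (powB mulF lact ract (0, g) k.+1)) //.
move: (h1 k) IH; set x := powB _ _ _ _ k.+1 => hx1 hx2; rewrite /mulB -[LHS]/(lact 0 x.2 + ract g x.1 + mulF g x.2) hx1 hx2.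
by rewrite (lact0l ax) (ract0r ax) !add0r.
Qed.

Theorem corollary3p4 (R : realType) (A : algType R[i]) (F : lmodType R[i])
  (phi : {scalar A}) (mulF : F -> F -> F) (lact : A -> F -> F)
  (ract : F -> A -> F) (Phi : {scalar F})
  (a : bool -> A) (f : bool -> F) (mu1 mu2 nu1 nu2 : nat -> R[i]) :
  ncpsB'_axioms phi mulF lact ract ->
  B'free mulF lact ract phi Phi a f ->
  (forall n, phi (a false ^+ n) = mu1 n) ->
  (forall n, phi (a true ^+ n) = mu2 n) ->
  (forall n, varphi'B Phi (powB mulF lact ract (0, f false) n) = nu1 n) ->
  (forall n, varphi'B Phi (powB mulF lact ract (0, f true) n) = nu2 n) ->
  forall mu : nat -> R[i], is_free_conv mu1 mu2 mu ->
  let b1 := (a false, f false) in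
  let b2 := (a true, f true) in
  let b := addB b1 b2 in
  let nu := fun n => varphi'B Phi (powB mulF lact ract b n) in
  (forall n, varphiB phi (powB mulF lact ract b n) = mu n) /\
  (forall m : int,
     lcoef (Gser nu) m =
     lcoef (lmul (Gcomp (fun n => nu1 n + nu2 n) (Fser mu)) (lderz (Fser mu))) m).
Proof.
move=> ax [fr cyc triv] hm1 hm2 hn1 hn2 mu [A' [psi [x [psi1 [frx [hx1 [hx2 hx]]]]]]] b1 b2 b nu.
have hmu : forall n, phi ((a false + a true) ^+ n) = mu n.
  move=> n; rewrite -hx; apply: free_sum_moments.
  - by split => //; apply: (phi1 ax).
  - by split.
  - by case => m; rewrite ?hm1 ?hm2 ?hx1 ?hx2.
have hmu' : forall n, varphiB phi (powB mulF lact ract b n) = mu n.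
  by move=> n; rewrite /varphiB (powB1 mulF lact ract a f n) hmu.
split => // m.
have ax' := ax.
case: ax' => _ [mA [mDl [mDr _]]].
apply: series_main.
- by rewrite -hmu expr0 (phi1 ax).
- by rewrite -hn1 -hn2 /varphi'B /powB /= linear0 addr0.
- move=> N n hn.
  rewrite /nu /varphi'B (PhiT ax cyc hn).
  have hM : Mp phi a N = MpS mu N.
    by apply/polyP => i; rewrite /Mp /MpS /tp !coef_poly /mua hmu.
  have hK : Kp phi mulF Phi a f N 0 = KpS mu (fun n => nu1 n + nu2 n) N 0.
    rewrite /Kp /KpS hM; apply: eq_bigr => k _; congr (_ *: _).
    rewrite /rho (rho_split mA mDl mDr triv) -hn1 -hn2 /varphi'B.
    by rewrite !(@powB0f _ _ _ phi mulF lact ract _ _ ax).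
  by rewrite hK hM.
Qed.
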